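(* Let $R$ be a ring. The following conditions are equivalent for a complex $F$ of left $R$-modules. (1) $F$ is exact and every cycle $Z_n(F)$ is a projective module. (2) Every morphism $X\to F$ with $X$ a bounded complex factors through a projective complex. (3) Every morphism $X\to F$ with $X$ a bounded below complex factors through a projective complex. (4) Every morphism of complexes $X\to F$ factors through a projective complex.
   Context: Complexes are homologically indexed, $Z_n(F)=\mathrm{Ker}\,d_n^F$; a complex $X$ is bounded below if there is $b$ with $X_n=0$ for all $n\le b$, and bounded if additionally $X_n=0$ for all sufficiently large $n$. *)

(* Defs.v *)
From HB Require Import structures.
From mathcomp Require Import all_boot all_order all_algebra.
Set Implicit Arguments. Unset Strict Implicit. Unset Printing Implicit Defensive.
Import Order.TTheory GRing.Theory Num.Theory.
Local Open Scope ring_scope.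

Record complex (R : pzRingType) := Complex {
  cobj :> int -> lmodType R;
  cdiff : forall n : int, {linear cobj n -> cobj (n - 1)};
  cdiff2 : forall (n : int) (x : cobj n), cdiff (n - 1) (cdiff n x) = 0 }.
Arguments cdiff {R} c n.
Arguments cobj {R} c n.

Record chain_map (R : pzRingType) (X Y : complex R) := ChainMap {
  cmap :> forall n : int, {linear X n -> Y n};
  cmap_comm : forall (n : int) (x : X n),
      cmap (n - 1) (cdiff X n x) = cdiff Y n (cmap n x) }.
Arguments cmap {R X Y} c n.

Definition projective_module (R : pzRingType) (P : lmodType R) : Prop :=
  forall (M N : lmodType R) (p : {linear M -> N}) (g : {linear P -> N}),
    (forall y : N, exists x : M, p x = y) ->
    exists h : {linear P -> M}, forall x : P, p (h x) = g x.

(* projective complex: projective object of the category of complexes,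
   i.e. lifting property against epimorphisms (= degreewise surjective
   chain maps) *)
Definition projective_complex (R : pzRingType) (P : complex R) : Prop :=
  forall (M N : complex R) (p : chain_map M N) (g : chain_map P N),
    (forall (n : int) (y : N n), exists x : M n, p n x = y) ->
    exists h : chain_map P M, forall (n : int) (x : P n), p n (h n x) = g n x.

Definition factors_through_projective (R : pzRingType) (X F : complex R)
    (f : chain_map X F) : Prop :=
  exists (P : complex R) (g : chain_map X P) (h : chain_map P F),
    projective_complex P /\ forall (n : int) (x : X n), f n x = h n (g n x).

Definition cycle_pred (R : pzRingType) (F : complex R) (n : int) : {pred (cobj F n)} :=
  fun x => cdiff F n x == 0.
Arguments cycle_pred {R} F n.

Lemma cycle_pred_closed (R : pzRingType) (F : complex R) (n : int) :
  GRing.subsemimod_closed (cycle_pred F n).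
Proof.
split; first split.
- by rewrite /in_mem /= /cycle_pred raddf0.
- move=> x y; rewrite /in_mem /= /cycle_pred => /eqP Hx /eqP Hy.
  rewrite raddfD; apply/eqP; transitivity (0 + 0 : cobj F (n - 1)).
    by congr (_ + _); [exact: Hx | exact: Hy].
  exact: addr0.
- move=> a x; rewrite /in_mem /= /cycle_pred => /eqP Hx.
  rewrite linearZ /=; apply/eqP; transitivity (a *: (0 : cobj F (n - 1))).
    by congr (_ *: _); exact: Hx.
  exact: scaler0.
Qed.

HB.instance Definition _ (R : pzRingType) (F : complex R) (n : int) :=
  GRing.isSubmodClosed.Build R (F n) (cycle_pred F n) (cycle_pred_closed F n).

Record cycles (R : pzRingType) (F : complex R) (n : int) := Cycle {
  cycle_val :> F n; _ : cycle_val \in cycle_pred F n }.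

HB.instance Definition _ (R : pzRingType) (F : complex R) (n : int) :=
  [isSub for @cycle_val R F n].
HB.instance Definition _ (R : pzRingType) (F : complex R) (n : int) :=
  [Choice of cycles F n by <:].
HB.instance Definition _ (R : pzRingType) (F : complex R) (n : int) :=
  [SubChoice_isSubLmodule of cycles F n by <:].

Definition boundary (R : pzRingType) (F : complex R) (n : int) (x : F n) : Prop :=
  exists y : F (n + 1),
    eq_rect ((n + 1) - 1) (fun k => F k) (cdiff F (n + 1) y) n (addrK 1 n) = x.

Definition exact_complex (R : pzRingType) (F : complex R) : Prop :=
  forall (n : int) (x : F n), cdiff F n x = 0 -> boundary x.

Definition zero_module_at (R : pzRingType) (X : complex R) (n : int) : Prop :=
  forall x : X n, x = 0.

Definition bounded_below (R : pzRingType) (X : complex R) : Prop :=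
  exists b : int, forall n : int, n <= b -> zero_module_at X n.

Definition bounded_complex (R : pzRingType) (X : complex R) : Prop :=
  bounded_below X /\ exists t : int, forall n : int, t <= n -> zero_module_at X n.

(* Main.v *)
Require Import Defs.
From HB Require Import structures.
From mathcomp Require Import all_boot all_order all_algebra.
From Stdlib Require Import ClassicalEpsilon.
From mathcomp Require Import zify.
Set Implicit Arguments. Unset Strict Implicit. Unset Printing Implicit Defensive.
Import Order.TTheory GRing.Theory Num.Theory.
Local Open Scope ring_scope.

Definition mk_lin (R : pzRingType) (U V : lmodType R) (f : U -> V) (H : linear f) : {linear U -> V} :=
  HB.pack f (GRing.isLinear.Build R U V *:%R f H).
Lemma mk_linE (R : pzRingType) (U V : lmodType R) (f : U -> V) (H : linear f) x : mk_lin H x = f x.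
Proof. by []. Qed.

Lemma dchoice {A : Type} {B : A -> Type} (P : forall a, B a -> Prop) :
  (forall a, exists b, P a b) -> exists f : forall a, B a, forall a, P a (f a).
Proof.
move=> H; exists (fun a => proj1_sig (constructive_indefinite_description _ (H a))).
by move=> a; exact: proj2_sig (constructive_indefinite_description _ (H a)).
Qed.

Section Casts.
Variable R : pzRingType.
Implicit Types X Y : complex R.

Definition trc X (a b : int) (e : a = b) (x : X a) : X b :=
  eq_rect a (fun k => X k) x b e.

Lemma trc_id X a (e : a = a) (x : X a) : trc e x = x.
Proof. by rewrite (eq_irrelevance e erefl). Qed.

Lemma trc_tr X a b c (e1 : a = b) (e2 : b = c) (x : X a) :
  trc e2 (trc e1 x) = trc (etrans e1 e2) x.
Proof. by case: c / e2; case: b / e1. Qed.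

Lemma trc_irr X a b (e e' : a = b) (x : X a) : trc e x = trc e' x.
Proof. by rewrite (eq_irrelevance e e'). Qed.

Lemma trc_lin X a b (e : a = b) : linear (@trc X a b e).
Proof. by case: b / e. Qed.

Lemma trcD X a b (e : a = b) (x y : X a) : trc e (x + y) = trc e x + trc e y.
Proof. by case: b / e. Qed.
Lemma trcB X a b (e : a = b) (x y : X a) : trc e (x - y) = trc e x - trc e y.
Proof. by case: b / e. Qed.
Lemma trc0 X a b (e : a = b) : trc e (0 : X a) = 0.
Proof. by case: b / e. Qed.

Lemma trc_inj X a b (e : a = b) (x y : X a) : trc e x = trc e y -> x = y.
Proof. by case: b / e. Qed.

Lemma cdiff_trc X a b (e : a = b) (x : X a) :
  cdiff X b (trc e x) = trc (congr1 (fun t => t - 1) e) (cdiff X a x).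
Proof. by case: b / e. Qed.

Lemma cmap_trc X Y (f : chain_map X Y) a b (e : a = b) (x : X a) :
  f b (trc e x) = trc e (f a x).
Proof. by case: b / e. Qed.

Definition trd X (a b : int) (x : X a) : X b :=
  if (a =P b) is ReflectT e then trc e x else 0.

Lemma trd_id X a (x : X a) : trd a x = x.
Proof. by rewrite /trd; case: eqP => // e; rewrite trc_id. Qed.

Lemma trd_lin X a b : linear (@trd X a b).
Proof. rewrite /trd; case: eqP => e r x y; first exact: trc_lin.
by rewrite scaler0 addr0. Qed.

End Casts.

Section Disk.
Variable R : pzRingType.


Section DiskB.
Variable B : lmodType R.
Definition dobj (m : int) : lmodType R := (B * B)%type.
Definition ddf (m : int) (x : dobj m) : dobj (m - 1) := (x.2, 0).
Lemma ddf_lin m : linear (@ddf m).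
Proof. move=> r [a b] [c d]; by apply: injective_projections; rewrite /ddf /= ?scaler0 ?addr0. Qed.
Definition dlin m : {linear dobj m -> dobj (m - 1)} := mk_lin (@ddf_lin m).
Lemma dd2 m x : dlin (m - 1) (dlin m x) = 0.
Proof. by []. Qed.
Definition disk : complex R := Complex dd2.
End DiskB.
Section Lift.
Variables (A B : lmodType R) (q : {linear A -> B}).
Definition dqf m (x : dobj A m) : dobj B m := (q x.1, q x.2).
Lemma dqf_lin m : linear (@dqf m).
Proof. by move=> r x y; apply: injective_projections; rewrite /dqf /= linearP. Qed.
Definition dq : chain_map (disk A) (disk B).
Proof.
refine (@ChainMap _ (disk A) (disk B) (fun m => mk_lin (@dqf_lin m)) _).
by move=> n x; rewrite /= /dqf /ddf /= linear0.
Defined.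

Variables (P : complex R) (phi : forall m, {linear P m -> B}).
Definition Phif m (x : P m) : dobj B m := (phi m x, phi (m - 1) (cdiff P m x)).
Lemma Phif_lin m : linear (@Phif m).
Proof. by move=> r x y; apply: injective_projections; rewrite /Phif /= !linearP. Qed.
Definition Phi : chain_map P (disk B).
Proof.
refine (@ChainMap _ P (disk B) (fun m => mk_lin (@Phif_lin m)) _).
by move=> n x; rewrite /= /Phif /ddf /= cdiff2 linear0.
Defined.

Lemma proj_family (HP : projective_complex P) (Hq : forall y, exists x, q x = y) :
  exists psi : forall m, {linear P m -> A}, forall m x, q (psi m x) = phi m x.
Proof.
have [|h Hh] := HP (disk A) (disk B) dq Phi.
  move=> n [y1 y2]; have [x1 <-] := Hq y1; have [x2 <-] := Hq y2.
  by exists (x1, x2).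
have lin m : linear (fun x => (h m x).1).
  by move=> r x y; rewrite linearP.
exists (fun m => mk_lin (lin m)) => m x /=.
by have := Hh m x; rewrite /= /dqf /Phif => -[].
Qed.
End Lift.
Lemma id_lin (X : complex R) m : linear (fun x : X m => x). Proof. by []. Qed.
Definition idc (X : complex R) : chain_map X X :=
  @ChainMap _ X X (fun m => mk_lin (@id_lin X m)) (fun n x => erefl).

Section Split.
Variable P : complex R.
Definition Mobj m : lmodType R := (P m * P (m + 1)%R)%type.
Definition Mdf m (x : Mobj m) : Mobj (m - 1) := (0, trc (esym (subrK 1 m)) x.1).
Lemma Mdf_lin m : linear (@Mdf m).
Proof.
move=> r x y; apply: injective_projections; rewrite /Mdf /= ?scaler0 ?addr0 //.
exact: trc_lin.
Qed.
Definition Mlin m : {linear Mobj m -> Mobj (m - 1)} := mk_lin (@Mdf_lin m).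
Lemma Md2 m x : Mlin (m - 1) (Mlin m x) = 0.
Proof. by apply: injective_projections; rewrite /= /Mdf /= //; apply: trc0. Qed.
Definition Mcx : complex R := Complex Md2.

Definition emf m (x : Mobj m) : P m := x.1 + trc (addrK 1 m) (cdiff P (m + 1) x.2).
Lemma emf_lin m : linear (@emf m).
Proof.
move=> r x y; rewrite /emf /= linearP trc_lin /=.
by rewrite scalerDr addrACA.
Qed.
Definition em : chain_map Mcx P.
Proof.
refine (@ChainMap _ Mcx P (fun m => mk_lin (@emf_lin m)) _).
move=> n x; rewrite /= /emf /Mdf /= cdiff_trc trc_tr trc_id add0r.
by rewrite linearD cdiff_trc cdiff2 trc0 addr0.
Defined.

Lemma proj_split (HP : projective_complex P) :
  exists s : forall m, {linear P m -> P (m + 1)}, forall m (w : P m),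
    cdiff P m w = 0 -> trc (addrK 1 m) (cdiff P (m + 1) (s m w)) = w.
Proof.
have [|h Hh] := HP Mcx P em (idc P).
  move=> n y; exists (y, 0); by rewrite /= /emf linear0 trc0 addr0.
have lin m : linear (fun x => (h m x).2).
  by move=> r x y; rewrite linearP.
exists (fun m => mk_lin (lin m)) => m w Hw /=.
have H1 : (h m w).1 = 0.
  have := cmap_comm h w; rewrite Hw linear0 => /(congr1 snd) /=.
  rewrite /Mdf /= => /esym H; apply: (trc_inj (e := esym (subrK 1 m))).
  by rewrite H trc0.
by have := Hh m w; rewrite /em /idc /= /emf H1 add0r.
Qed.
End Split.
Section Proj1.
Variable F : complex R.

Lemma cyc_mem n (x : F n) : cdiff F n x = 0 -> x \in cycle_pred F n.
Proof. by move=> H; rewrite /in_mem /= /cycle_pred H. Qed.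

Lemma cycP n (z : cycles F n) : cdiff F n (cycle_val z) = 0.
Proof. by case: z => x /= /eqP. Qed.

Lemma cval_lin n : linear (@cycle_val R F n).
Proof. by move=> r x y. Qed.

Lemma dZ_mem n (x : F n) : cdiff F n x \in cycle_pred F (n - 1).
Proof. by apply: cyc_mem; rewrite cdiff2. Qed.
Definition dZf n (x : F n) : cycles F (n - 1) := Cycle (dZ_mem x).
Lemma dZf_lin n : linear (@dZf n).
Proof. by move=> r x y; apply: val_inj; rewrite /= !linearP. Qed.
Definition dZ n : {linear F n -> cycles F (n - 1)} := mk_lin (@dZf_lin n).

Lemma exact_at (Hex : exact_complex F) n (x : F (n - 1)) :
  cdiff F (n - 1) x = 0 -> exists y : F n, cdiff F n y = x.
Proof.
move=> /Hex [y0 Hy0]; exists (trc (subrK 1 n) y0).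
rewrite cdiff_trc -Hy0; exact: trc_irr.
Qed.

Lemma idZ_lin n : linear (fun z : cycles F n => z). Proof. by []. Qed.

Lemma sig_ex (Hex : exact_complex F) (Hpr : forall n, projective_module (cycles F n)) :
  exists sig : forall n, {linear cycles F (n - 1) -> F n},
    forall n z, cdiff F n (sig n z) = cycle_val z.
Proof.
apply: (@dchoice int (fun n => {linear cycles F (n - 1) -> F n}) (fun n s => forall z, cdiff F n (s z) = cycle_val z)).
move=> n.
have [|s Hs] := Hpr (n - 1) (F n) (cycles F (n - 1)) (dZ n) (mk_lin (@idZ_lin (n - 1))).
  move=> z; have [y Hy] := exact_at Hex (cycP z).
  by exists y; apply: val_inj; rewrite /= Hy.
by exists s => z; have := Hs z => /(congr1 val).
Qed.

Section Lift1.
Variables (sig : forall n, {linear cycles F (n - 1) -> F n})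
  (Hsig : forall n z, cdiff F n (sig n z) = cycle_val z).
Variables (M N : complex R) (p : chain_map M N) (g : chain_map F N)
  (a : forall n, {linear cycles F (n - 1) -> M n})
  (Ha : forall n z, p n (a n z) = g n (sig n z)).

Lemma pi_mem n (x : F n) : x - sig n (dZ n x) \in cycle_pred F n.
Proof. by apply: cyc_mem; rewrite linearB /= Hsig /= subrr. Qed.
Definition pif n (x : F n) : cycles F n := Cycle (pi_mem x).
Lemma pif_lin n : linear (@pif n).
Proof.
move=> r x y; apply: val_inj; rewrite /=.
have E z : dZf z = dZ n z by [].
by rewrite !E !linearP /= scalerBr scalerN addrACA.
Qed.

Lemma kapp_mem n (z : cycles F n) : trc (esym (addrK 1 n)) (cycle_val z) \in cycle_pred F (n + 1 - 1).
Proof. by apply: cyc_mem; rewrite cdiff_trc cycP trc0. Qed.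
Definition kapp n (z : cycles F n) : cycles F (n + 1 - 1) := Cycle (kapp_mem z).

Lemma kap_mem n k (e : n = k) (z : cycles F (n - 1)) :
  trc (congr1 (fun t => t - 1) e) (cycle_val z) \in cycle_pred F (k - 1).
Proof. case: k / e; by case: z. Qed.
Definition kap n k (e : n = k) (z : cycles F (n - 1)) : cycles F (k - 1) := Cycle (kap_mem e z).

Lemma a_tr n k (e : n = k) (z : cycles F (n - 1)) : a k (kap e z) = trc e (a n z).
Proof. case: k / e; congr (a n _); exact: val_inj. Qed.

Definition hf n (x : F n) : M n :=
  a n (dZ n x) + trc (addrK 1 n) (cdiff M (n + 1) (a (n + 1) (kapp (pif x)))).

Lemma hf_lin n : linear (@hf n).
Proof.
move=> r x y; rewrite /hf linearP.
have -> : pif (r *: x + y) = r *: pif x + pif y by apply: pif_lin.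
have -> : kapp (r *: pif x + pif y) = r *: kapp (pif x) + kapp (pif y) by apply: val_inj; rewrite /= trc_lin.
by rewrite !linearP trc_lin scalerDr addrACA.
Qed.

Definition hmap : chain_map F M.
Proof.
refine (@ChainMap _ F M (fun n => mk_lin (@hf_lin n)) _).
move=> n x; rewrite /= /hf.
have -> : dZ (n - 1) (cdiff F n x) = 0 by apply: val_inj; rewrite /= cdiff2.
rewrite linear0 add0r linearD cdiff_trc cdiff2 trc0 addr0.
have -> : kapp (pif (cdiff F n x)) = kap (esym (subrK 1 n)) (dZ n x).
  apply: val_inj; rewrite /=.
  have -> : dZf (cdiff F n x) = 0 by apply: val_inj; rewrite /= cdiff2.
  rewrite linear0 subr0; exact: trc_irr.
by rewrite a_tr cdiff_trc trc_tr trc_id.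
Defined.

Lemma hmapP n x : p n (hmap n x) = g n x.
Proof.
rewrite /= /hf linearD Ha cmap_trc cmap_comm Ha -cmap_comm Hsig /= cmap_trc.
by rewrite /= trc_tr trc_id linearB addrC subrK.
Qed.
End Lift1.

Lemma proj_of_1 (Hex : exact_complex F) (Hpr : forall n, projective_module (cycles F n)) :
  projective_complex F.
Proof.
have [sig Hsig] := sig_ex Hex Hpr.
move=> M N p g Hsurj.
have [a Ha] : exists a : forall n, {linear cycles F (n - 1) -> M n},
    forall n z, p n (a n z) = g n (sig n z).
  apply: (@dchoice int (fun n => {linear cycles F (n - 1) -> M n}) (fun n a => forall z, p n (a z) = g n (sig n z))).
  move=> n.
  have lin : linear (fun z => g n (sig n z)) by move=> r x y; rewrite !linearP.
  have [b Hb] := Hpr (n - 1) (M n) (N n) (p n) (mk_lin lin) (Hsurj n).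
  by exists b.
exists (hmap Hsig a) => n x; apply: hmapP; exact: Ha.
Qed.

End Proj1.
End Disk.
Section BSub.
Variables (R : pzRingType) (V : lmodType R) (b : bool).
Definition bpred : {pred V} := fun v => b || (v == 0).
Lemma bpred_closed : GRing.subsemimod_closed bpred.
Proof.
split; first split.
- by rewrite /in_mem /= /bpred eqxx orbT.
- move=> x y; rewrite /in_mem /= /bpred.
  case: b => //= /eqP -> /eqP ->; by rewrite addr0.
- move=> a x; rewrite /in_mem /= /bpred.
  case: b => //= /eqP ->; by rewrite scaler0.
Qed.
End BSub.

HB.instance Definition _ (R : pzRingType) (V : lmodType R) (b : bool) :=
  GRing.isSubmodClosed.Build R V (@bpred R V b) (@bpred_closed R V b).

Record bsub (R : pzRingType) (V : lmodType R) (b : bool) := BSub {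
  bval :> V; _ : bval \in @bpred R V b }.

HB.instance Definition _ (R : pzRingType) (V : lmodType R) (b : bool) :=
  [isSub for @bval R V b].
HB.instance Definition _ (R : pzRingType) (V : lmodType R) (b : bool) :=
  [Choice of bsub V b by <:].
HB.instance Definition _ (R : pzRingType) (V : lmodType R) (b : bool) :=
  [SubChoice_isSubLmodule of bsub V b by <:].

Lemma bsub0 (R : pzRingType) (V : lmodType R) (x : bsub V false) : x = 0.
Proof. apply: val_inj; case: x => v /=; rewrite /in_mem /= /bpred /= => /eqP. done. Qed.

Section Two.
Variables (R : pzRingType) (F : complex R) (n : int).
Local Notation Z := (cycles F n).
Definition Xobj (k : int) : lmodType R := bsub Z (k == n).
Lemma zero_lin (U V : lmodType R) : linear (fun _ : U => (0 : V)).
Proof. by move=> r x y; rewrite scaler0 addr0. Qed.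
Definition Xd k : {linear Xobj k -> Xobj (k - 1)} := mk_lin (@zero_lin _ _).
Lemma Xd2 k x : Xd (k - 1) (Xd k x) = 0. Proof. by []. Qed.
Definition Xc : complex R := Complex Xd2.

Lemma Xobj0 k (x : Xobj k) : k != n -> x = 0.
Proof.
move=> H; apply: val_inj; case: x => v /=; rewrite /in_mem /= /bpred (negbTE H) /=.
by move/eqP.
Qed.

Definition iotf k (x : Xobj k) : F k := trd k (cycle_val (bval x)).
Lemma iotf_lin k : linear (@iotf k).
Proof. by move=> r x y; rewrite /iotf /= trd_lin. Qed.

Lemma trd0 (X : complex R) a b : trd b (0 : X a) = 0.
Proof. by rewrite /trd; case: eqP => // e; rewrite trc0. Qed.

Lemma iotf_cyc k (x : Xobj k) : cdiff F k (iotf x) = 0.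
Proof.
have [e|ne] : k = n \/ k <> n by case: (k =P n); [left|right].
rewrite /iotf.
  move: (@bval R Z (k == n) x) => z; subst k; rewrite trd_id; exact: cycP.
have E : iotf (0 : Xobj k) = 0 := linear0 (mk_lin (@iotf_lin k)).
by rewrite (@Xobj0 k x (introN eqP ne)) E linear0.
Qed.

Definition iot : chain_map Xc F.
Proof.
refine (@ChainMap _ Xc F (fun k => mk_lin (@iotf_lin k)) _).
move=> k x /=; rewrite [X in X = _]/iotf /= trd0; symmetry; exact: iotf_cyc.
Defined.

Lemma Xc_bounded : bounded_complex Xc.
Proof.
split.
  exists (n - 1) => k Hk x; apply: Xobj0; apply/negP => /eqP E.
  by move: Hk; rewrite E; lia.
exists (n + 1) => k Hk x; apply: Xobj0; apply/negP => /eqP E.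
by move: Hk; rewrite E; lia.
Qed.
Lemma jz_mem (z : Z) : z \in @bpred R Z (n == n).
Proof. by rewrite /in_mem /= /bpred eqxx. Qed.
Definition jzf (z : Z) : Xobj n := @BSub R Z (n == n) z (jz_mem z).
Lemma jzf_lin : linear jzf.
Proof. by move=> r x y; apply: val_inj. Qed.
Definition jz : {linear Z -> Xobj n} := mk_lin jzf_lin.

Lemma two_to_one_at
  (H2 : forall (X : complex R) (f : chain_map X F), bounded_complex X -> factors_through_projective f) :
  (forall x : F n, cdiff F n x = 0 -> boundary x) /\ projective_module Z.
Proof.
have [P [g [h [HP Hfac]]]] := H2 Xc iot Xc_bounded.
have [s Hs] := proj_split HP.
have Hw z : cdiff P n (g n (jz z)) = 0.
  by rewrite -cmap_comm; have -> : cdiff Xc n (jz z) = 0 by []; rewrite linear0.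
have Hz z : cycle_val z = trc (addrK 1 n) (cdiff F (n + 1) (h (n + 1) (s n (g n (jz z))))).
  rewrite -cmap_comm -cmap_trc Hs //.
  by have := Hfac n (jz z); rewrite /= /iotf /= trd_id.
split.
  move=> x Hx; exists (h (n + 1) (s n (g n (jz (Cycle (cyc_mem Hx)))))).
  exact: (esym (Hz (Cycle (cyc_mem Hx)))).
have rho_mem (y : P n) : h n (trc (addrK 1 n) (cdiff P (n + 1) (s n y))) \in cycle_pred F n.
  by apply: cyc_mem; rewrite -cmap_comm cdiff_trc cdiff2 trc0 linear0.
pose rho y : Z := Cycle (rho_mem y).
have rho_lin : linear rho.
  move=> r x y; apply: val_inj; rewrite /= !linearP trc_lin /= linearP.
  done.
have rhoK z : rho (g n (jz z)) = z.
  apply: val_inj; rewrite /= (Hs _ _ (Hw z)).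
  by have := Hfac n (jz z); rewrite /= /iotf /= trd_id.
move=> A B q u Hq.
have phi_lin k : linear (fun y : P k => u (rho (trd n y))).
  move=> r x y; rewrite trd_lin.
  have -> : rho (r *: trd n x + trd n y) = r *: rho (trd n x) + rho (trd n y) by apply: rho_lin.
  by rewrite linearP.
have [psi Hpsi] := proj_family (fun k => mk_lin (phi_lin k)) HP Hq.
have lift_lin : linear (fun z => psi n (g n (jz z))) by move=> r x y; rewrite !linearP.
exists (mk_lin lift_lin) => z /=.
by rewrite Hpsi /= trd_id rhoK.
Qed.
End Two.

Theorem corollary3p9 (R : pzRingType) (F : complex R) :
  [<-> exact_complex F /\ (forall n : int, projective_module (cycles F n));
       forall (X : complex R) (f : chain_map X F),
         bounded_complex X -> factors_through_projective f;
       forall (X : complex R) (f : chain_map X F),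
         bounded_below X -> factors_through_projective f;
       forall (X : complex R) (f : chain_map X F), factors_through_projective f].
Proof.
have P03 : exact_complex F /\ (forall n : int, projective_module (cycles F n)) ->
    forall (X : complex R) (f : chain_map X F), factors_through_projective f.
  move=> [Hex Hpr] X f; exists F, f, (idc F); split; last by [].
  exact: proj_of_1.
have P32 : (forall (X : complex R) (f : chain_map X F), factors_through_projective f) ->
    forall (X : complex R) (f : chain_map X F), bounded_below X -> factors_through_projective f.
  by move=> H X f _; exact: H.
have P21 : (forall (X : complex R) (f : chain_map X F), bounded_below X -> factors_through_projective f) ->
    forall (X : complex R) (f : chain_map X F), bounded_complex X -> factors_through_projective f.
  by move=> H X f [Hb _]; exact: H.
have P10 : (forall (X : complex R) (f : chain_map X F), bounded_complex X -> factors_through_projective f) ->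
    exact_complex F /\ (forall n : int, projective_module (cycles F n)).
  move=> H; split.
    by move=> n x Hx; exact: (@two_to_one_at R F n H).1 x Hx.
  by move=> n; exact: (@two_to_one_at R F n H).2.
tfae.
- by move=> H; apply: P21; apply: P32; apply: P03.
- by move=> H; apply: P32; apply: P03; apply: P10.
- by move=> H; apply: P03; apply: P10; apply: P21.
- by move=> H; apply: P10; apply: P21; apply: P32.
Qed.
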